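(* Let $Z=(\varphi^2-z_x\varphi-z_y)\,\varphi_\lambda^2$, where $\varphi_\lambda=d\varphi/d\lambda$. Then $Z$ is a formal Laurent series of the form $Z=\sum_{n\ge-4}Z^{(n)}\lambda^{n-2}$, with coefficients $Z^{(n)}$ functions on the covering $\bar\tau_*$, and each $Z^{(n)}$ is a shadow of a symmetry of the Gibbons–Tsarev equation in $\bar\tau_*$, i.e. $$\tilde D_y^2(Z^{(n)})+z_x\tilde D_x\tilde D_y(Z^{(n)})-z_y\tilde D_x^2(Z^{(n)})+z_{xy}\tilde D_x(Z^{(n)})-z_{xx}\tilde D_y(Z^{(n)})=0 .$$
   Context: The Gibbons–Tsarev equation $\mathcal E$ is $z_{yy}+z_xz_{xy}-z_yz_{xx}+1=0$ with internal coordinates $x,y,z_X$ ($z_X=\partial^{a+b}z/\partial x^a\partial y^b$, $X=x^ay^b$, $b\in\{0,1\}$) and total derivatives $D_x,D_y$. Put $\varphi^{(1)}=-y$, $\varphi^{(2)}=-x$, $\varphi^{(3)}=-z-\tfrac12y^2$, let $\varphi^{(k)}$, $k\ge4$, be new coordinates, and $\varphi(\lambda)=1/\lambda+\sum_{k\ge1}\varphi^{(k)}\lambda^k$. The covering $\bar\tau_*$ has coordinates $x,y,z_X,\varphi^{(k)}$ ($k\ge4$) and commuting total derivatives $\tilde D_x=D_x+\sum_{k\ge4}\varphi^{(k)}_x\partial/\partial\varphi^{(k)}$, $\tilde D_y=D_y+\sum_{k\ge4}\varphi^{(k)}_y\partial/\partial\varphi^{(k)}$, where the functions $\varphi^{(k)}_x,\varphi^{(k)}_y$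 (polynomials in $x,y,z,z_x,z_y,\varphi^{(4)},\dots,\varphi^{(k-1)}$) are uniquely determined by requiring that, with $\varphi_x=\sum_{k\ge1}\tilde D_x(\varphi^{(k)})\lambda^k$, $\varphi_y=\sum_{k\ge1}\tilde D_y(\varphi^{(k)})\lambda^k$, one has $(\varphi^2-z_x\varphi-z_y)\varphi_x=-1$ and $(\varphi^2-z_x\varphi-z_y)\varphi_y=-(\varphi-z_x)$ coefficientwise in $\lambda$. *)

(* Defs.v *)
From HB Require Import structures.
From mathcomp Require Import all_boot all_order all_algebra.
Set Implicit Arguments. Unset Strict Implicit. Unset Printing Implicit Defensive.
Import GRing.Theory.
Local Open Scope ring_scope.

Section GT.
Variable A : comUnitRingType.

(* Formal Laurent series in lambda with coefficients in A, bounded below: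
   Laurent m c  represents  sum_{i >= 0} c i * lambda^(i - m). *)
Record laurent := Laurent { lshift : nat; lseq : nat -> A }.

Definition lcoef (f : laurent) (n : int) : A :=
  match (n + (lshift f)%:Z)%R with Posz i => lseq f i | Negz _ => 0 end.

Definition leqs (f g : laurent) : Prop := forall n : int, lcoef f n = lcoef g n.

Definition lconst (a : A) : laurent := Laurent 0 (fun i => if i == 0%N then a else 0).

Definition ladd (f g : laurent) : laurent :=
  let M := maxn (lshift f) (lshift g) in
  Laurent M (fun i => lcoef f (i%:Z - M%:Z) + lcoef g (i%:Z - M%:Z)).

Definition lopp (f : laurent) : laurent := Laurent (lshift f) (fun i => - lseq f i).

Definition lsub (f g : laurent) : laurent := ladd f (lopp g).

Definition lmul (f g : laurent) : laurent :=
  Laurent (lshift f + lshift g)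
    (fun i => \sum_(j < i.+1) lseq f j * lseq g (i - j)%N).

Definition lderiv (f : laurent) : laurent :=
  Laurent (lshift f).+1 (fun i => lseq f i *~ (i%:Z - (lshift f)%:Z)).

Definition derivation (D : A -> A) : Prop :=
  (forall a b, D (a + b) = D a + D b) /\ (forall a b, D (a * b) = D a * b + a * D b).

Definition GT_phik (x y z : A) (phi : nat -> A) (k : nat) : A :=
  if k == 1%N then - y
  else if k == 2%N then - x
  else if k == 3%N then - z - y ^+ 2 / 2%:R
  else phi k.

(* phi(lambda) = 1/lambda + sum_{k>=1} phi^(k) lambda^k *)
Definition GT_phi (x y z : A) (phi : nat -> A) : laurent :=
  Laurent 1 (fun i => match i with 0 => 1 | 1 => 0 | k.+2 => GT_phik x y z phi k.+1 end).

Definition GT_phiD (D : A -> A) (x y z : A) (phi : nat -> A) : laurent :=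
  Laurent 0 (fun k => if k is 0 then 0 else D (GT_phik x y z phi k)).

Definition GT_Q (zx zy : A) (ph : laurent) : laurent :=
  lsub (lsub (lmul ph ph) (lmul (lconst zx) ph)) (lconst zy).

Definition GT_Z (zx zy : A) (ph : laurent) : laurent :=
  lmul (GT_Q zx zy ph) (lmul (lderiv ph) (lderiv ph)).

Definition GT_shadow (Dx Dy : A -> A) (z f : A) : Prop :=
  Dy (Dy f) + Dx z * Dx (Dy f) - Dy z * Dx (Dx f)
    + Dx (Dy z) * Dx f - Dx (Dx z) * Dy f = 0.

End GT.

(* Main.v *)
Require Import Defs.
From HB Require Import structures.
From mathcomp Require Import all_boot all_order all_algebra.
From mathcomp Require Import ring zify.
From mathcomp Require Import boolp.
Import GRing.Theory.
Local Open Scope ring_scope.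


Record ser (A : Type) := Ser { sc : nat -> A }.
Arguments Ser {A}. Arguments sc {A}.
HB.instance Definition _ (A : Type) := gen_eqMixin (ser A).
HB.instance Definition _ (A : Type) := gen_choiceMixin (ser A).

Lemma serP (A : Type) (f g : ser A) : (forall i, sc f i = sc g i) -> f = g.
Proof. by case: f; case: g => f g /= h; congr Ser; apply: funext => i; rewrite h. Qed.

Section SerOps.
Variable A : comNzRingType.
Definition s0 : ser A := Ser (fun _ => 0).
Definition sadd (f g : ser A) := Ser (fun i => sc f i + sc g i).
Definition sopp (f : ser A) := Ser (fun i => - sc f i).
Lemma saddA : associative sadd. Proof. by move=> f g h; apply: serP => i /=; rewrite addrA. Qed.
Lemma saddC : commutative sadd. Proof. by move=> f g; apply: serP => i /=; rewrite addrC. Qed.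
Lemma sadd0 : left_id s0 sadd. Proof. by move=> f; apply: serP => i /=; rewrite add0r. Qed.
Lemma saddN : left_inverse s0 sopp sadd. Proof. by move=> f; apply: serP => i /=; rewrite addNr. Qed.

Definition smul (f g : ser A) := Ser (fun i => \sum_(j < i.+1) sc f j * sc g (i - j)%N).
Definition s1 : ser A := Ser (fun i => (i == 0)%:R).
Definition tr (n : nat) (f : ser A) : {poly A} := \poly_(j < n) sc f j.

Lemma trE n f k : (k < n)%N -> (tr n f)`_k = sc f k.
Proof. by move=> h; rewrite /tr coef_poly h. Qed.

Lemma smul_tr n f g i : (i < n)%N -> sc (smul f g) i = (tr n f * tr n g)`_i.
Proof.
move=> hi; rewrite coefM /=; apply: eq_bigr => j _.
have hj := ltn_ord j.
rewrite !trE //; lia.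
Qed.
Arguments smul_tr {n} f g {i}.

Lemma mulmod n (p p' q q' : {poly A}) i :
  (forall k, (k < n)%N -> p`_k = p'`_k) -> (forall k, (k < n)%N -> q`_k = q'`_k) ->
  (i < n)%N -> (p * q)`_i = (p' * q')`_i.
Proof.
move=> hp hq hi; rewrite !coefM; apply: eq_bigr => j _.
have hj := ltn_ord j.
rewrite hp ?hq //; lia.
Qed.

Lemma tr_smul {n} f g {k} : (k < n)%N -> (tr n (smul f g))`_k = (tr n f * tr n g)`_k.
Proof. by move=> h; rewrite trE // (smul_tr f g h). Qed.

Lemma smulA : associative smul.
Proof.
move=> f g h; apply: serP => i.
have hi : (i < i.+1)%N by [].
rewrite (smul_tr _ _ hi) (smul_tr _ _ hi).
have e1 := @mulmod i.+1 (tr i.+1 (smul f g)) (tr i.+1 f * tr i.+1 g) (tr i.+1 h) (tr i.+1 h) i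
  (fun k hk => tr_smul f g hk) (fun k hk => erefl) hi.
have e2 := @mulmod i.+1 (tr i.+1 f) (tr i.+1 f) (tr i.+1 (smul g h)) (tr i.+1 g * tr i.+1 h) i
  (fun k hk => erefl) (fun k hk => tr_smul g h hk) hi.
by rewrite e1 e2 mulrA.
Qed.

Lemma smulC : commutative smul.
Proof.
move=> f g; apply: serP => i.
by rewrite (smul_tr f g (ltnSn i)) (smul_tr g f (ltnSn i)) mulrC.
Qed.

Lemma tr_s1 n : (0 < n)%N -> tr n s1 = 1.
Proof.
move=> hn; apply/polyP => k; rewrite coef1 /tr coef_poly /=.
case: ifP => // /negbT; rewrite -leqNgt => h.
have -> : (k == 0%N) = false by apply/negbTE; lia.
by [].
Qed.

Lemma smul1 : left_id s1 smul.
Proof.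
move=> f; apply: serP => i.
by rewrite (smul_tr _ _ (ltnSn i)) tr_s1 // mul1r trE.
Qed.

Lemma smulDl : left_distributive smul sadd.
Proof.
move=> f g h; apply: serP => i /=.
by rewrite -big_split /=; apply: eq_bigr => j _; rewrite mulrDl.
Qed.

Lemma s1_neq0 : s1 != s0.
Proof.
apply/eqP => h; have := congr1 (fun f => sc f 0) h => /=.
by move/eqP; rewrite oner_eq0.
Qed.
End SerOps.
Arguments tr {A}.

HB.instance Definition _ (A : comNzRingType) :=
  GRing.isZmodule.Build (ser A) (@saddA A) (@saddC A) (@sadd0 A) (@saddN A).
HB.instance Definition _ (A : comNzRingType) :=
  GRing.Zmodule_isComNzRing.Build (ser A) (@smulA A) (@smulC A) (@smul1 A) (@smulDl A) (@s1_neq0 A).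

Section SerTheory.
Variable A : comNzRingType.
Implicit Types f g h : ser A.

Lemma scD f g i : sc (f + g) i = sc f i + sc g i. Proof. by []. Qed.
Lemma scN f i : sc (- f) i = - sc f i. Proof. by []. Qed.
Lemma scB f g i : sc (f - g) i = sc f i - sc g i. Proof. by []. Qed.
Lemma sc0 i : sc (0 : ser A) i = 0. Proof. by []. Qed.
Lemma sc1 i : sc (1 : ser A) i = (i == 0)%:R. Proof. by []. Qed.
Lemma scM f g i : sc (f * g) i = \sum_(j < i.+1) sc f j * sc g (i - j)%N. Proof. by []. Qed.
Lemma scM_tr n f g i : (i < n)%N -> sc (f * g) i = (tr n f * tr n g)`_i.
Proof. exact: smul_tr. Qed.
Lemma scM0 f g : sc (f * g) 0 = sc f 0 * sc g 0.
Proof. by rewrite scM big_ord1. Qed.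
End SerTheory.

Section SerMore.
Variable A : comNzRingType.
Implicit Types f g h : ser A.

Definition cs (a : A) : ser A := Ser (fun i => if i == 0%N then a else 0).
Definition lam : ser A := Ser (fun i => (i == 1%N)%:R).
Definition dser (D : A -> A) f : ser A := Ser (fun i => D (sc f i)).
Definition dls f : ser A := Ser (fun i => sc f i.+1 *+ i.+1).

Lemma scCM a g i : sc (cs a * g) i = a * sc g i.
Proof.
rewrite scM big_ord_recl /= subn0 big1 ?addr0 // => j _.
by rewrite mul0r.
Qed.

Lemma csD a b : cs (a + b) = cs a + cs b.
Proof. by apply: serP => i; rewrite scD /=; case: (i == 0%N); rewrite ?addr0. Qed.
Lemma csN a : cs (- a) = - cs a.
Proof. by apply: serP => i; rewrite scN /=; case: (i == 0%N); rewrite ?oppr0. Qed.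
Lemma csM a b : cs (a * b) = cs a * cs b.
Proof. by apply: serP => i; rewrite scCM /=; case: (i == 0%N); rewrite ?mulr0. Qed.
Lemma cs1 : cs 1 = 1.
Proof. by apply: serP => i; rewrite sc1 /=; case: (i == 0%N). Qed.

Lemma lamM g i : sc (lam * g) i = if i is k.+1 then sc g k else 0.
Proof.
case: i => [|k]; first by rewrite scM0 /= mul0r.
rewrite scM big_ord_recl /= mul0r add0r big_ord_recl /= mul1r subSS subn0.
by rewrite big1 ?addr0 // => j _; rewrite /= mul0r.
Qed.

Lemma lamXM d g i : sc (lam ^+ d * g) i = if (d <= i)%N then sc g (i - d) else 0.
Proof.
elim: d g i => [|d IH] g i; first by rewrite expr0 mul1r subn0.
rewrite exprS -mulrA lamM; case: i => [|i]; rewrite ?IH ?subSS //.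
Qed.

Lemma scMn f n i : sc (f *+ n) i = sc f i *+ n.
Proof. by elim: n => [|n IH]; rewrite ?mulr0n // !mulrS scD IH. Qed.

Section Der.
Variable D : A -> A.
Hypothesis hD : (forall a b, D (a + b) = D a + D b) /\ (forall a b, D (a * b) = D a * b + a * D b).

Lemma D0 : D 0 = 0.
Proof. by apply: (addrI (D 0)); rewrite addr0 -hD.1 addr0. Qed.
Lemma D1 : D 1 = 0.
Proof. by apply: (addrI (D 1)); rewrite addr0 -{3}(mulr1 1) hD.2 mulr1 mul1r. Qed.
Lemma Dsum n (F : 'I_n -> A) : D (\sum_(j < n) F j) = \sum_(j < n) D (F j).
Proof.
apply: (big_rec2 (fun u v => D u = v)); first exact: D0.
by move=> j u v _ <-; rewrite hD.1.
Qed.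
Lemma DMn a n : D (a *+ n) = D a *+ n.
Proof. by elim: n => [|n IH]; rewrite ?mulr0n ?D0 // !mulrS hD.1 IH. Qed.

Lemma dserD f g : dser D (f + g) = dser D f + dser D g.
Proof. by apply: serP => i; rewrite /= hD.1. Qed.
Lemma dserM f g : dser D (f * g) = dser D f * g + f * dser D g.
Proof.
apply: serP => i; rewrite scD !scM -[LHS]/(D (sc (f * g) i)) scM Dsum -big_split /=.
by apply: eq_bigr => j _; rewrite hD.2.
Qed.
Lemma dser_dls f : dser D (dls f) = dls (dser D f).
Proof. by apply: serP => i; rewrite /= DMn. Qed.
Lemma dser_lam : dser D lam = 0.
Proof. by apply: serP => i; rewrite sc0 /=; case: (i == 1%N); rewrite ?D1 ?D0. Qed.
Lemma dser_cs a : dser D (cs a) = cs (D a).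
Proof. by apply: serP => i; rewrite /=; case: (i == 0%N); rewrite ?D0. Qed.
End Der.

Lemma dlsD f g : dls (f + g) = dls f + dls g.
Proof. by apply: serP => i; rewrite /= mulrnDl. Qed.

Lemma dls_tr n f k : (k.+1 < n)%N -> sc (dls f) k = ((tr n f)^`())`_k.
Proof. by move=> h; rewrite coef_deriv trE. Qed.
Arguments dls_tr {n} f {k}.

Lemma dlsM f g : dls (f * g) = dls f * g + f * dls g.
Proof.
apply: serP => i; rewrite scD.
have h2 : (i.+1 < i.+2)%N by [].
rewrite (dls_tr _ h2) coef_deriv (@tr_smul _ _ f g _ h2) -coef_deriv derivM coefD.
have hi : (i < i.+1)%N by [].
rewrite (@scM_tr _ _ (dls f) g _ hi) (@scM_tr _ _ f (dls g) _ hi).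
have cong : forall u : ser A, forall k, (k < i.+1)%N -> (tr i.+2 u)`_k = (tr i.+1 u)`_k.
  by move=> u k hk; rewrite !trE //; lia.
have congd : forall u : ser A, forall k, (k < i.+1)%N ->
    ((tr i.+2 u)^`())`_k = (tr i.+1 (dls u))`_k.
  by move=> u k hk; rewrite trE // (dls_tr _ (n := i.+2)) //; lia.
congr (_ + _).
- exact: (@mulmod _ _ _ _ _ _ _ (congd f) (cong g) hi).
- exact: (@mulmod _ _ _ _ _ _ _ (cong f) (congd g) hi).
Qed.
Lemma dls_lam : dls lam = 1.
Proof. by apply: serP => i; rewrite sc1 /=; case: i => [|i] //=; rewrite mul0rn. Qed.
Lemma dls_cs a : dls (cs a) = 0.
Proof. by apply: serP => i; rewrite /= mul0rn. Qed.
End SerMore.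
Arguments lam {A}.
Arguments cs {A}.
Arguments dls {A}.
Arguments dser {A}.
Arguments dserD {A D} hD.
Arguments dserM {A D} hD.
Arguments dser_dls {A D} hD.
Arguments dser_lam {A D} hD.
Arguments dser_cs {A D} hD.
Arguments D0 {A D} hD.
Arguments D1 {A D} hD.
Arguments DMn {A D} hD.
Arguments Dsum {A D} hD.
Arguments dls_cs {A} a.
Arguments dls_lam {A}.
Arguments dlsD {A}.
Arguments dlsM {A}.

Section Inv.
Variable A : comNzRingType.

Lemma spow_low (s : ser A) : sc s 0 = 0 -> forall k m, (m < k)%N -> sc (s ^+ k) m = 0.
Proof.
move=> s0 k; elim: k => [|k IH] m hm //.
rewrite exprS scM big1 // => j _.
case: (nat_of_ord j) (ltn_ord j) => [|j'] hj; first by rewrite s0 mul0r.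
rewrite IH ?mulr0 //; lia.
Qed.

Lemma ser_inv (Q : ser A) : sc Q 0 = 1 -> exists V, Q * V = 1.
Proof.
move=> hQ.
pose s := 1 - Q.
have s0 : sc s 0 = 0 by rewrite scB hQ sc1 subrr.
pose V := Ser (fun n => \sum_(k < n.+1) sc (s ^+ k) n).
have Vc : forall N n, (n < N)%N -> sc V n = \sum_(k < N) sc (s ^+ k) n.
  move=> N n hn /=.
  rewrite (big_ord_widen N (fun k => sc (s ^+ k) n)) // big_mkcond /=.
  apply: eq_bigr => k _; case: ifP => // /negbT; rewrite -leqNgt => h.
  by rewrite spow_low //.
exists V.
have -> : Q = 1 - s by rewrite /s opprB addrC subrK.
rewrite mulrBl mul1r; apply: serP => n.
rewrite scB scM.
have e : \sum_(j < n.+1) sc s j * sc V (n - j)%N =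
         \sum_(k < n.+1) sc (s ^+ k.+1) n.
  transitivity (\sum_(j < n.+1) \sum_(k < n.+1) sc s j * sc (s ^+ k) (n - j)%N).
    apply: eq_bigr => j _; rewrite (Vc n.+1) ?mulr_sumr //; lia.
  rewrite exchange_big /=; apply: eq_bigr => k _.
  by rewrite exprS scM.
rewrite e (Vc n.+2) // big_ord_recl /=.
rewrite (_ : \sum_(i < n.+1) sc (s ^+ bump 0 i) n = \sum_(k < n.+1) sc (s ^+ k.+1) n) ?addrK //.
Qed.
End Inv.
Lemma DN (A : comNzRingType) (D : A -> A) : (forall a b, D (a + b) = D a + D b) -> forall a, D (- a) = - D a.
Proof.
move=> hD a; apply: (addrI (D a)); rewrite -hD !subrr.
by apply: (addrI (D 0)); rewrite addr0 -hD addr0.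
Qed.


Lemma red4 {S : comNzRingType} {q u g0 g1 g2 g3 g4 : S} : q * u = 1 ->
  g0 * q^+4 + g1 * q^+3 + g2 * q^+2 + g3 * q + g4 = 0 ->
  g0 + g1 * u + g2 * u^+2 + g3 * u^+3 + g4 * u^+4 = 0.
Proof.
move=> hqu H.
have -> : g0 + g1 * u + g2 * u^+2 + g3 * u^+3 + g4 * u^+4 =
  g0 * (q*u)^+4 + g1 * u * (q*u)^+3 + g2 * u^+2 * (q*u)^+2 + g3 * u^+3 * (q*u) + g4 * u^+4.
  by rewrite hqu !expr1n !mulr1.
have -> : g0 * (q*u)^+4 + g1 * u * (q*u)^+3 + g2 * u^+2 * (q*u)^+2 + g3 * u^+3 * (q*u) + g4 * u^+4
  = u^+4 * (g0 * q^+4 + g1 * q^+3 + g2 * q^+2 + g3 * q + g4) by ring.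
by rewrite H mulr0.
Qed.

Lemma core {S : comNzRingType} {dx dy dl : S -> S}
  (dxD : forall a b, dx (a + b) = dx a + dx b) (dxM : forall a b, dx (a * b) = dx a * b + a * dx b)
  (dyD : forall a b, dy (a + b) = dy a + dy b) (dyM : forall a b, dy (a * b) = dy a * b + a * dy b)
  (dlD : forall a b, dl (a + b) = dl a + dl b) (dlM : forall a b, dl (a * b) = dl a * b + a * dl b)
  (cxl : forall f, dx (dl f) = dl (dx f)) (cyl : forall f, dy (dl f) = dl (dy f))
  {F l cA cB cAx cAy cAxx cAxy U : S}
  (dxl : dx l = 0) (dyl : dy l = 0) (dll : dl l = 1) (dlcA : dl cA = 0) (dlcB : dl cB = 0)
  (dxcA : dx cA = cAx) (dycA : dy cA = cAy) (dxcB : dx cB = cAy)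
  (dycB : dy cB = -1 - cA * cAy + cB * cAx)
  (dxcAx : dx cAx = cAxx) (dycAx : dy cAx = cAxy) (dxcAy : dx cAy = cAxy)
  (dycAy : dy cAy = - (cA * cAxy) + cB * cAxx)
  (hx : (F * F - cA * l * F - cB * (l * l)) * dx F = - (l * l * l))
  (hy : (F * F - cA * l * F - cB * (l * l)) * dy F = - (l * l * (F - cA * l)))
  (hQU : (F * F - cA * l * F - cB * (l * l)) * U = 1) :
  let Q := F * F - cA * l * F - cB * (l * l) in
  let P := l * dl F - F in
  let W := Q * (P * P) in
  dy (dy W) + cA * dx (dy W) - cB * dx (dx W) + cAy * dx W - cAx * dy W = 0.
Proof.
move=> Q0 P0 W0.
rewrite /W0 /P0 /Q0.
have [Q hQ] : exists Q, Q = F * F - cA * l * F - cB * (l * l) by eexists.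
have [P hP] : exists P, P = l * dl F - F by eexists.
rewrite -hQ -hP.
rewrite -hQ in hx hy hQU.
have aux : forall t : S, t = t + t -> t = 0.
  by move=> t h; apply: (addrI t); rewrite addr0 -h.
have d0 : forall d : S -> S, (forall a b, d (a + b) = d a + d b) -> d 0 = 0.
  by move=> d hd; apply: aux; rewrite -hd addr0.
have d1 : forall d : S -> S, (forall a b, d (a * b) = d a * b + a * d b) -> d 1 = 0.
  by move=> d hd; apply: aux; have := hd 1 1; rewrite !mul1r mulr1.
have dN : forall d : S -> S, (forall a b, d (a + b) = d a + d b) -> forall a, d (- a) = - d a.
  move=> d hd a; apply/eqP; rewrite -subr_eq0 opprK -hd addNr.
  by rewrite (d0 d hd).
have dn : forall d : S -> S, (forall a b, d (a + b) = d a + d b) ->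
   (forall a b, d (a * b) = d a * b + a * d b) -> forall k, d (k%:R) = 0.
  move=> d hd hm; elim=> [|k IH]; first exact: d0.
  by rewrite mulrS hd IH (d1 d hm) addr0.
have dxN := dN dx dxD; have dyN := dN dy dyD; have dlN := dN dl dlD.
have dx1 := d1 dx dxM; have dy1 := d1 dy dyM; have dl1 := d1 dl dlM.
have dxn := dn dx dxD dxM; have dyn := dn dy dyD dyM; have dln := dn dl dlD dlM.
have hQU' : U * Q = 1 by rewrite mulrC.
have hQU2 : Q * U = 1 := hQU.
have EX : dx F = - (l * l * l * U).
  by rewrite -[dx F]mul1r -hQU' -mulrA hx mulrN mulrC.
have EY : dy F = - (l * l * (F - cA * l) * U).
  by rewrite -[dy F]mul1r -hQU' -mulrA hy mulrN mulrC.
have dU : forall d : S -> S, (forall a b, d (a + b) = d a + d b) ->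
    (forall a b, d (a * b) = d a * b + a * d b) -> d U = - (U * U) * d Q.
  move=> d hd hm; have h := hm Q U; rewrite hQU2 (d1 d hm) in h.
  have h2 : Q * d U = - (d Q * U).
    by apply/eqP; rewrite -addr_eq0 addrC -h.
  by rewrite -[d U]mul1r -hQU' -mulrA h2; ring.
have EUl : dl U = - (U * U) * dl Q := dU dl dlD dlM.
have EUx : dx U = - (U * U) * dx Q := dU dx dxD dxM.
have EUy : dy U = - (U * U) * dy Q := dU dy dyD dyM.
have EF1x : dx (dl F) = dl (- (l * l * l * U)) by rewrite cxl EX.
have EF1y : dy (dl F) = dl (- (l * l * (F - cA * l) * U)) by rewrite cyl EY.
have rQx : dx Q = dx (F * F - cA * l * F - cB * (l * l)) by rewrite hQ.
have rQy : dy Q = dy (F * F - cA * l * F - cB * (l * l)) by rewrite hQ.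
have rQl : dl Q = dl (F * F - cA * l * F - cB * (l * l)) by rewrite hQ.
have rx := (dxD, dxM, dxN, dx1, dxn, EX, EUx, EF1x, dxl, dxcA, dxcB, dxcAx, dxcAy, rQx).
have ry := (dyD, dyM, dyN, dy1, dyn, EY, EUy, EF1y, dyl, dycA, dycB, dycAx, dycAy, rQy).
have rl := (dlD, dlM, dlN, dl1, dln, dll, dlcA, dlcB, EUl, rQl).
have EPx : dx P = P * (- (U * U * l * l * l * l * cA) + (2%:R * F * U * U * l * l * l)).
  apply/eqP; rewrite -subr_eq0; apply/eqP.
  transitivity (0 + (- (2%:R * l * l * l)) * U + (- (2%:R * l * l * l * l * l * cB) - (2%:R * F * l * l * l * l * cA) + (2%:R * F * F * l * l * l)) * U^+2 + 0 * U^+3 + 0 * U^+4).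
    by rewrite hP !rx !rl; ring.
  apply: (red4 hQU2); rewrite ?hQ; ring.
have EPy : dy P = P * ((U * U * l * l * l * l * cB) + (U * U * l * l * l * l * cA * cA) - (2%:R * F * U * U * l * l * l * cA) + (F * F * U * U * l * l)).
  apply/eqP; rewrite -subr_eq0; apply/eqP.
  transitivity (0 + ((2%:R * l * l * l * cA) - ((dl F) * l * l * l) - (F * l * l)) * U + ((2%:R * l * l * l * l * l * cA * cB) - ((dl F) * l * l * l * l * l * cB) - (F * l * l * l * l * cB) + (2%:R * F * l * l * l * l * cA * cA) - (F * (dl F) * l * l * l * l * cA) - (3%:R * F * F * l * l * l * cA) + (F * F * (dl F) * l * l * l) + (F * F * F * l * l)) * U^+2 + 0 * U^+3 + 0 * U^+4).
    by rewrite hP !ry !rl; ring.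
  apply: (red4 hQU2); rewrite ?hQ; ring.
have eX1 : dx Q + 2%:R * Q * (- (U * U * l * l * l * l * cA) + (2%:R * F * U * U * l * l * l)) = (- (l * l * cAy) - (U * l * l * l * l * cA) - (F * l * cAx) + (2%:R * F * U * l * l * l)).
  apply/eqP; rewrite -subr_eq0; apply/eqP.
  transitivity (0 + ((2%:R * l * l * l * l * cA) - (4%:R * F * l * l * l)) * U + ((2%:R * l * l * l * l * l * l * cA * cB) - (4%:R * F * l * l * l * l * l * cB) + (2%:R * F * l * l * l * l * l * cA * cA) - (6%:R * F * F * l * l * l * l * cA) + (4%:R * F * F * F * l * l * l)) * U^+2 + 0 * U^+3 + 0 * U^+4).
    by rewrite !rx; rewrite ?hQ; ring.
  apply: (red4 hQU2); rewrite ?hQ; ring.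
have eY1 : dy Q + 2%:R * Q * ((U * U * l * l * l * l * cB) + (U * U * l * l * l * l * cA * cA) - (2%:R * F * U * U * l * l * l * cA) + (F * F * U * U * l * l)) = ((l * l) - (l * l * cB * cAx) + (l * l * cA * cAy) + (2%:R * U * l * l * l * l * cB) + (U * l * l * l * l * cA * cA) - (F * l * cAy) - (F * U * l * l * l * cA)).
  apply/eqP; rewrite -subr_eq0; apply/eqP.
  transitivity (0 + (- (2%:R * l * l * l * l * cB) - (2%:R * l * l * l * l * cA * cA) + (4%:R * F * l * l * l * cA) - (2%:R * F * F * l * l)) * U + (- (2%:R * l * l * l * l * l * l * cB * cB) - (2%:R * l * l * l * l * l * l * cA * cA * cB) + (2%:R * F * l * l * l * l * l * cA * cB) - (2%:R * F * l * l * l * l * l * cA * cA * cA) + (6%:R * F * F * l * l * l * l * cA * cA) - (6%:R * F * F * F * l * l * l * cA) + (2%:R * F * F * F * F * l * l)) * U^+2 + 0 * U^+3 + 0 * U^+4).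
    by rewrite !ry; rewrite ?hQ; ring.
  apply: (red4 hQU2); rewrite ?hQ; ring.
have [X1 hX1] : exists X1, X1 = (- (l * l * cAy) - (U * l * l * l * l * cA) - (F * l * cAx) + (2%:R * F * U * l * l * l)) by eexists.
have [Y1 hY1] : exists Y1, Y1 = ((l * l) - (l * l * cB * cAx) + (l * l * cA * cAy) + (2%:R * U * l * l * l * l * cB) + (U * l * l * l * l * cA * cA) - (F * l * cAy) - (F * U * l * l * l * cA)) by eexists.
have EX1 : dx (Q * (P * P)) = P * P * X1.
  by rewrite !dxM EPx hX1 -eX1; ring.
have EY1 : dy (Q * (P * P)) = P * P * Y1.
  by rewrite !dyM EPy hY1 -eY1; ring.
have eX1x : dx X1 = (- (l * l * cAxy) - (2%:R * U * U * l * l * l * l * l * l) - (U * U * l * l * l * l * l * l * cA * cAy) + (U * U * U * l * l * l * l * l * l * l * l * cA * cA) - (F * l * cAxx) + (2%:R * F * U * U * l * l * l * l * l * cAy) - (F * U * U * l * l * l * l * l * cA * cAx) - (4%:R * F * U * U * U * l * l * l * l * l * l * l * cA) + (2%:R * F * F * U * U * l * l * l * l * cAx) + (4%:R * F * F * U * U * U * l * l * l * l * l * l)).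
  by rewrite hX1 !rx; rewrite ?hQ; ring.
have eY1x : dx Y1 = (- (l * l * cB * cAxx) + (l * l * cA * cAxy) + (3%:R * U * l * l * l * l * cAy) + (2%:R * U * l * l * l * l * cA * cAx) + (2%:R * U * U * l * l * l * l * l * l * cB * cAy) + (U * U * l * l * l * l * l * l * cA) + (U * U * l * l * l * l * l * l * cA * cA * cAy) - (2%:R * U * U * U * l * l * l * l * l * l * l * l * cA * cB) - (U * U * U * l * l * l * l * l * l * l * l * cA * cA * cA) - (F * l * cAxy) - (F * U * l * l * l * cAx) + (2%:R * F * U * U * l * l * l * l * l * cB * cAx) - (F * U * U * l * l * l * l * l * cA * cAy) + (F * U * U * l * l * l * l * l * cA * cA * cAx) + (4%:R * F * U * U * U * l * l * l * l * l * l * l * cB) + (3%:R * F * U * U * U * l * l * l * l * l * l * l * cA * cA) - (F * F * U * U * l * l * l * l * cA * cAx) - (2%:R * F * F * U * U * U * l * l * l * l * l * l * cA)).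
  by rewrite hY1 !rx; rewrite ?hQ; ring.
have eY1y : dy Y1 = ((l * l * cAy * cAy) + (l * l * cAx) - (l * l * cB * cAxy) - (l * l * cB * cAx * cAx) + (l * l * cA * cAx * cAy) + (l * l * cA * cB * cAxx) - (l * l * cA * cA * cAxy) - (2%:R * U * l * l * l * l) + (2%:R * U * l * l * l * l * cB * cAx) - (U * l * l * l * l * cA * cAy) - (2%:R * U * U * l * l * l * l * l * l * cB) + (2%:R * U * U * l * l * l * l * l * l * cB * cB * cAx) - (2%:R * U * U * l * l * l * l * l * l * cA * cB * cAy) - (2%:R * U * U * l * l * l * l * l * l * cA * cA) + (U * U * l * l * l * l * l * l * cA * cA * cB * cAx) - (U * U * l * l * l * l * l * l * cA * cA * cA * cAy) + (2%:R * U * U * U * l * l * l * l * l * l * l * l * cA * cA * cB) + (U * U * U * l * l * l * l * l * l * l * l * cA * cA * cA * cA) - (F * l * cB * cAxx) + (F * l * cA * cAxy) + (2%:R * F * U * U * l * l * l * l * l * cB * cAy) + (2%:R * F * U * U * l * l * l * l * l * cA) - (F * U * U * l * l * l * l * l * cA * cB * cAx) + (2%:R * F * U * U * l * l * l * l * l * cA * cA * cAy) - (6%:R * F * U * U * U * l * l * l * l * l * l * l * cA * cB) - (4%:R * F * U * U * U * l * l * l * l * l * l * l * cA * cA * cA) - (F * F * U * U * l * l * l * l * cA * cAy) + (4%:R * F * F * U * U * U * l * l * l * l * l * l * cB) + (5%:R * F * F * U * U * U * l * l * l * l * l * l * cA * cA) - (2%:R * F * F * F * U * U * U * l * l * l *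 l * l * cA)).
  by rewrite hY1 !ry; rewrite ?hQ; ring.
rewrite EX1 EY1 !(dxM, dyM) EPx EPy eX1x eY1x eY1y.
transitivity (P * P * (0 + (- (2%:R * l * l * l * l) + (l * l * l * l * cA * cAy) + (l * l * l * l * cA * cA * cAx) + (2%:R * F * l * l * l * cAy)) * U + ((2%:R * l * l * l * l * l * l * cB) + (l * l * l * l * l * l * cA * cB * cAy) - (l * l * l * l * l * l * cA * cA) + (l * l * l * l * l * l * cA * cA * cB * cAx) + (2%:R * F * l * l * l * l * l * cB * cAy) + (2%:R * F * l * l * l * l * l * cA) + (F * l * l * l * l * l * cA * cA * cAy) + (F * l * l * l * l * l * cA * cA * cA * cAx) + (2%:R * F * F * l * l * l * l) + (F * F * l * l * l * l * cA * cAy) - (F * F * l * l * l * l * cA * cA * cAx) - (2%:R * F * F * F * l * l * l * cAy)) * U^+2 + ((4%:R * l * l * l * l * l * l * l * l * cB * cB) - (l * l * l * l * l * l * l * l * cA * cA * cB) + (8%:R * F * l * l * l * l * l * l * l * cA * cB) - (F * l * l * l * l * l * l * l * cA * cA * cA) - (4%:R * F * F * l * l * l * l * l * l * cB) + (5%:R * F * F * l * l * l * l * l * l * cA * cA) - (4%:R * F * F * F * l * l * l * l * l * cA)) * U^+3 + 0 * U^+4)).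
  by rewrite hX1 hY1; ring.
by rewrite (red4 hQU2) ?mulr0 //; rewrite ?hQ; ring.
Qed.

Module LaurentPart.
Set Implicit Arguments. Unset Strict Implicit.

Section Laur.
Variable A : comUnitRingType.
Implicit Types f g : laurent A.

Definition base f : ser A := Ser (lseq f).
Definition nrm (K : nat) f : ser A := Ser (fun i => lcoef f (i%:Z - K%:Z)).

Lemma lcoef_pos f n i : n + (Defs.lshift f)%:Z = i%:Z -> lcoef f n = lseq f i.
Proof. by rewrite /lcoef => ->. Qed.

Lemma lcoef_neg f n : n + (Defs.lshift f)%:Z < 0 -> lcoef f n = 0.
Proof. by rewrite /lcoef; case: (n + _)%R => // i h; exfalso; lia. Qed.

Lemma lcoef_add f g n : lcoef (ladd f g) n = lcoef f n + lcoef g n.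
Proof.
rewrite {1}/lcoef /=.
case E: (n + (maxn (Defs.lshift f) (Defs.lshift g))%:Z)%R => [i|k].
  by rewrite (_ : i%:Z - _ = n) //; lia.
have h : n + (maxn (Defs.lshift f) (Defs.lshift g))%:Z < 0 by rewrite E.
by rewrite !lcoef_neg ?addr0 //; lia.
Qed.

Lemma lcoef_opp f n : lcoef (lopp f) n = - lcoef f n.
Proof. by rewrite /lcoef /=; case: (n + _)%R => // k; rewrite oppr0. Qed.

Lemma nrm_add K f g : nrm K (ladd f g) = nrm K f + nrm K g.
Proof. by apply: serP => i; rewrite scD /= lcoef_add. Qed.
Lemma nrm_opp K f : nrm K (lopp f) = - nrm K f.
Proof. by apply: serP => i; rewrite scN /= lcoef_opp. Qed.
Lemma nrm_sub K f g : nrm K (lsub f g) = nrm K f - nrm K g.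
Proof. by rewrite /lsub nrm_add nrm_opp. Qed.

Lemma nrm_base K f : (Defs.lshift f <= K)%N -> nrm K f = lam ^+ (K - Defs.lshift f) * base f.
Proof.
move=> hK; apply: serP => i; rewrite lamXM /=.
case: ifP => h.
  by apply: lcoef_pos; lia.
by apply: lcoef_neg; move/negbT: h; rewrite -ltnNge => h; lia.
Qed.

Lemma nrm_self f : nrm (Defs.lshift f) f = base f.
Proof. by rewrite nrm_base // subnn expr0 mul1r. Qed.

Lemma base_lmul f g : base (lmul f g) = base f * base g.
Proof. by apply: serP. Qed.
Lemma base_lconst a : base (lconst a) = cs a.
Proof. by apply: serP. Qed.
Lemma base_lderiv f : base (lderiv f) = lam * dls (base f) - base f *+ Defs.lshift f.
Proof.
apply: serP => i; rewrite scB scMn lamM /=.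
case: i => [|i] /=.
  by rewrite sub0r mulrNz sub0r.
by rewrite mulrzBr -!pmulrn.
Qed.
Lemma leqs_nrm K f g : leqs f g -> nrm K f = nrm K g.
Proof. by move=> h; apply: serP => i /=; rewrite h. Qed.
End Laur.

Section Spec.
Variables (A : comUnitRingType) (x y z : A) (phi : nat -> A) (zx zy : A).
Local Notation ph := (GT_phi x y z phi).

Lemma eQ : base (GT_Q zx zy ph) =
  base ph * base ph - cs zx * lam * base ph - cs zy * (lam * lam).
Proof.
rewrite -nrm_self /GT_Q /= !nrm_sub.
rewrite (@nrm_base _ 2 (lmul ph ph)) // (@nrm_base _ 2 (lmul (lconst zx) ph)) //.
rewrite (@nrm_base _ 2 (lconst zy)) //= !base_lmul !base_lconst.
rewrite expr0 expr1 expr2 mul1r; ring.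
Qed.

Lemma ePsi : base (lderiv ph) = lam * dls (base ph) - base ph.
Proof. by rewrite base_lderiv mulr1n. Qed.

Lemma eZ : base (GT_Z zx zy ph) = base (GT_Q zx zy ph) * (base (lderiv ph) * base (lderiv ph)).
Proof. by rewrite /GT_Z !base_lmul. Qed.

Lemma hcov_base (G R : laurent A) : leqs (lmul (GT_Q zx zy ph) G) R -> Defs.lshift G = 0%N ->
  base (GT_Q zx zy ph) * base G = nrm 2 R.
Proof.
move=> h hG; rewrite -(leqs_nrm 2 h) nrm_base /=; last by rewrite hG.
by rewrite hG /= expr0 mul1r base_lmul.
Qed.

Lemma phiD_base (D : A -> A) (hD : derivation D) :
  dser D (base ph) = lam * base (GT_phiD D x y z phi).
Proof.
apply: serP => i; rewrite lamM; case: i => [|[|k]] /=.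
- exact: (D1 hD).
- exact: (D0 hD).
- by [].
Qed.
End Spec.

End LaurentPart.
Import LaurentPart.


Theorem mainTheorem11 (A : comUnitRingType) (Dx Dy : A -> A)
  (x y z : A) (phi : nat -> A)
  (h2 : (2%:R : A) \is a GRing.unit)
  (hDx : derivation Dx) (hDy : derivation Dy)
  (hcomm : forall a, Dx (Dy a) = Dy (Dx a))
  (hxx : Dx x = 1) (hxy : Dy x = 0) (hyx : Dx y = 0) (hyy : Dy y = 1)
  (hGT : Dy (Dy z) + Dx z * Dx (Dy z) - Dy z * Dx (Dx z) + 1 = 0)
  (hcovx : leqs (lmul (GT_Q (Dx z) (Dy z) (GT_phi x y z phi)) (GT_phiD Dx x y z phi))
                (lconst (-1)))
  (hcovy : leqs (lmul (GT_Q (Dx z) (Dy z) (GT_phi x y z phi)) (GT_phiD Dy x y z phi))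
                (lopp (lsub (GT_phi x y z phi) (lconst (Dx z))))) :
  (forall n : int, n < -4 -> lcoef (GT_Z (Dx z) (Dy z) (GT_phi x y z phi)) (n - 2) = 0)
  /\ (forall n : int, -4 <= n ->
        GT_shadow Dx Dy z (lcoef (GT_Z (Dx z) (Dy z) (GT_phi x y z phi)) (n - 2))).
Proof.
have shZ : Defs.lshift (GT_Z (Dx z) (Dy z) (GT_phi x y z phi)) = 6%N by [].
split.
  move=> n hn; apply: lcoef_neg; rewrite shZ; lia.
move=> n hn.
have [i hi] : exists i : nat, n - 2 + (6%N)%:Z = i%:Z.
  by exists (absz (n + 4)); lia.
rewrite (lcoef_pos (f := GT_Z (Dx z) (Dy z) (GT_phi x y z phi)) (i := i)); last by rewrite shZ; exact: hi.
pose F := base (GT_phi x y z phi).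
pose cA := cs (Dx z). pose cB := cs (Dy z).
pose cAx := cs (Dx (Dx z)). pose cAy := cs (Dx (Dy z)).
pose cAxx := cs (Dx (Dx (Dx z))). pose cAxy := cs (Dx (Dx (Dy z))).
have hDxD := hDx.1. have hDxM := hDx.2. have hDyD := hDy.1. have hDyM := hDy.2.
have eyy : Dy (Dy z) = -1 - Dx z * Dx (Dy z) + Dy z * Dx (Dx z).
  by rewrite -[Dy (Dy z)]subr0 -{1}hGT; ring.
have hQ0 : sc (F * F - cA * lam * F - cB * (lam * lam)) 0 = 1.
  rewrite !scB !scM0 /=; ring.
have [V hV] := @ser_inv _ _ hQ0.
have eQ' := eQ x y z phi (Dx z) (Dy z).
have hx : (F * F - cA * lam * F - cB * (lam * lam)) * dser Dx F = - (lam * lam * lam).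
  rewrite (phiD_base x y z phi hDx) -eQ' mulrCA (hcov_base hcovx) //.
  rewrite nrm_base //= base_lconst csN cs1 subn0; ring.
have hy : (F * F - cA * lam * F - cB * (lam * lam)) * dser Dy F = - (lam * lam * (F - cA * lam)).
  rewrite (phiD_base x y z phi hDy) -eQ' mulrCA (hcov_base hcovy) //.
  rewrite nrm_opp nrm_sub !nrm_base //= base_lconst subn0 (_ : (2 - 1)%N = 1%N) // -/F -/cA; ring.
have dxcA : dser Dx cA = cAx := dser_cs hDx _.
have dycA : dser Dy cA = cAy by rewrite /cA (dser_cs hDy) /cAy hcomm.
have dxcB : dser Dx cB = cAy := dser_cs hDx _.
have dycB : dser Dy cB = -1 - cA * cAy + cB * cAx.
  by rewrite /cB (dser_cs hDy) eyy !(csD, csN, csM, cs1).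
have dxcAx : dser Dx cAx = cAxx := dser_cs hDx _.
have dycAx : dser Dy cAx = cAxy by rewrite /cAx (dser_cs hDy) -!hcomm.
have dxcAy : dser Dx cAy = cAxy := dser_cs hDx _.
have dycAy : dser Dy cAy = - (cA * cAxy) + cB * cAxx.
  rewrite /cAy (dser_cs hDy) -hcomm eyy.
  have e3 : Dx (-1 - Dx z * Dx (Dy z) + Dy z * Dx (Dx z)) =
      - (Dx z * Dx (Dx (Dy z))) + Dy z * Dx (Dx (Dx z)).
    rewrite !hDxD !(@DN _ Dx hDxD) !hDxM (D1 hDx); ring.
  by rewrite e3 !(csD, csN, csM).
have hL := core (dserD hDx) (dserM hDx) (dserD hDy) (dserM hDy) (@dlsD A) (@dlsM A)
  (dser_dls hDx) (dser_dls hDy) (dser_lam hDx) (dser_lam hDy) (@dls_lam A) (dls_cs _) (dls_cs _)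
  dxcA dycA dxcB dycB dxcAx dycAx dxcAy dycAy hx hy hV.
cbv zeta in hL.
have eW : base (GT_Z (Dx z) (Dy z) (GT_phi x y z phi)) =
  (F * F - cA * lam * F - cB * (lam * lam)) * ((lam * dls F - F) * (lam * dls F - F)).
  by rewrite eZ eQ' ePsi.
rewrite -eW in hL.
move/(congr1 (fun f => sc f i)): hL.
rewrite /cA /cB /cAx /cAy sc0 !(scD, scN, scCM).
by rewrite /GT_shadow.
Qed.
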